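(* Let $G$ be a self-similar group generated by a finite symmetric set $S$ of states of a bounded automaton over the alphabet $X=\{0,1\}$, acting transitively on every level $X^n$ of the binary tree, and assume all tile graphs $\Gamma_n'$ of $G$ are connected. Then for every $n\ge1$ the covering $\pi:\Gamma_{n+1}\to\Gamma_n$, $\pi(ux)=u$, is normal with Galois group $\mathrm{Gal}(\Gamma_{n+1}|\Gamma_n)\cong\Psi_G\cong \mathbb Z/2\mathbb Z$.
   Context: Self-similar action: $g(xw)=g(x)\,g|_x(w)$ with $g|_x\in G$. Root permutation $\psi_g\in\mathrm{Sym}(X)$: $x\mapsto g(x)$; $\Psi_G=\langle\psi_s:s\in S\rangle$. A finite invertible automaton is bounded if the number of directed paths of length $n$ in its Moore diagram avoiding the trivial state is bounded independently of $n$. Schreier graph $\Gamma_n$: vertex set $X^n$, for each $v\in X^n$, $s\in S$ an edge joining $v$ and $s(v)$ (edges from $s$ at $v$ and $s^{-1}$ at $s(v)$ identified). Tile graph $\Gamma_n'$: spanning subgraph of $\Gamma_n$ with the edges $\{v,s(v)\}$ such that $s|_v=\mathbb 1$. A $d$-sheeted unramified covering $\pi:\widetilde Y\to Y$ (surjective, locally bijective on neighbourhoods, fibres of size $d$) is normal (Galois) if there are $d$ automorphisms $\sigma$ of $\widetilde Y$ with $\pi\circ\sigma=\pi$; they form the Galois group. *)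

(* Defs.v *)
From HB Require Import structures.
From mathcomp Require Import all_boot all_order all_fingroup all_algebra.
From Stdlib Require Import Relations.
Set Implicit Arguments. Unset Strict Implicit. Unset Printing Implicit Defensive.

(* A state q has root permutation rho q : {perm bool} and sections           *)
Section Automaton.
Variables (Q : finType) (rho : Q -> {perm bool}) (tau : Q -> bool -> Q).

Fixpoint aact (q : Q) (w : seq bool) : seq bool :=
  if w is x :: w' then rho q x :: aact (tau q x) w' else [::].

Lemma size_aact q w : size (aact q w) = size w.
Proof. by elim: w q => [|x w IH] q //=; rewrite IH. Qed.

Lemma act_tupleP n q (t : n.-tuple bool) : size (aact q t) == n.
Proof. by rewrite size_aact size_tuple. Qed.

Definition actt n q (t : n.-tuple bool) : n.-tuple bool := Tuple (act_tupleP q t).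

Definition sec (q : Q) (u : seq bool) : Q := foldl tau q u.

Definition trivial_state (q : Q) : Prop := forall w, aact q w = w.

Definition actl (l : seq Q) (w : seq bool) : seq bool := foldr aact w l.

(* bounded automaton: the number of directed paths of length n in the Moore
   diagram (edges q --x--> q|_x) all of whose vertices are non-trivial states
   is bounded independently of n.  A path of length n is a pair (q, w) with
   size w = n; its vertices are the sections of q at the prefixes of w. *)
Definition bounded_automaton : Prop :=
  exists C : nat, forall (n : nat) (P : seq (Q * seq bool)), uniq P ->
    (forall p, p \in P -> size p.2 = n /\
        forall k, k <= n -> ~ trivial_state (sec p.1 (take k p.2))) ->
    size P <= C.

(* G = group generated by S; S symmetric, so G is the monoid generated by S *)
Definition in_group (S : {set Q}) (f : seq bool -> seq bool) : Prop :=
  exists l : seq Q, all (mem S) l /\ forall w, f w = actl l w.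

Definition self_similar (S : {set Q}) : Prop :=
  forall s x, s \in S -> in_group S (aact (tau s x)).

Definition level_transitive (S : {set Q}) : Prop :=
  forall n (u v : n.-tuple bool), exists l : seq Q,
    all (mem S) l /\ actl l u = v.

Definition tile_edge (S : {set Q}) (n : nat) (u v : n.-tuple bool) : Prop :=
  exists s, s \in S /\ actt s u = v /\ trivial_state (sec s u).

Definition tile_connected (S : {set Q}) (n : nat) : Prop :=
  forall u v : n.-tuple bool, clos_refl_sym_trans _ (@tile_edge S n) u v.

Variables (S : {set Q}) (inv : Q -> Q).

Definition gen := {q : Q | q \in S}.

(* darts of Gamma_n: (v, s) is the dart from v to s(v) *)
Definition dart (n : nat) := (n.-tuple bool * gen)%type.

Definition dsrc n (d : dart n) : n.-tuple bool := d.1.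

Definition drev n (d : dart n) : dart n :=
  (actt (val d.2) d.1, insubd d.2 (inv (val d.2))).

Lemma take_tupleP n (t : n.+1.-tuple bool) : size (take n t) == n.
Proof. by rewrite size_takel // size_tuple. Qed.

Definition piV n (t : n.+1.-tuple bool) : n.-tuple bool := Tuple (take_tupleP t).
Definition piD n (d : dart n.+1) : dart n := (piV d.1, d.2).

End Automaton.

(* Generic dart graphs (V, D, src, rev): rev is an involution on darts;      *)
(* the target of d is src (rev d).  Fixed darts of rev are half-loops.       *)
Section Coverings.
Variables (V1 D1 V2 D2 : finType).
Variables (src1 : D1 -> V1) (rev1 : D1 -> D1) (src2 : D2 -> V2) (rev2 : D2 -> D2).
Variables (fV : V1 -> V2) (fD : D1 -> D2).

Definition graph_morphism : Prop :=
  forall d, fV (src1 d) = src2 (fD d) /\ fD (rev1 d) = rev2 (fD d).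

Definition is_covering (k : nat) : Prop :=
  [/\ graph_morphism,
      forall v2, exists v1, fV v1 = v2,
      forall v1 d2, src2 d2 = fV v1 -> exists! d1, src1 d1 = v1 /\ fD d1 = d2
    & forall v2, #|[set v1 | fV v1 == v2]| = k].

Definition deck_group : {set ({perm V1} * {perm D1})%type} :=
  [set p : ({perm V1} * {perm D1})%type | [forall d, [&& src1 (p.2 d) == p.1 (src1 d),
                          rev1 (p.2 d) == p.2 (rev1 d) &
                          fD (p.2 d) == fD d]]
           && [forall v, fV (p.1 v) == fV v]].

Definition normal_covering (k : nat) : Prop :=
  is_covering k /\ #|deck_group| = k.

End Coverings.

(* Main.v *)
Require Import Defs.
From HB Require Import structures.
From mathcomp Require Import all_boot all_order all_fingroup all_algebra all_solvable.
From Stdlib Require Import Relations.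
Set Implicit Arguments. Unset Strict Implicit. Unset Printing Implicit Defensive.

Section Aux.
Variables (Q : finType) (rho : Q -> {perm bool}) (tau : Q -> bool -> Q).

Lemma aact_rcons q u x :
  aact rho tau q (rcons u x) = rcons (aact rho tau q u) (rho (sec tau q u) x).
Proof. by elim: u q => [|y u IH] q //=; rewrite IH. Qed.

Lemma take_aact q m w : take m (aact rho tau q w) = aact rho tau q (take m w).
Proof. by elim: w q m => [|y w IH] q [|m] //=; rewrite IH. Qed.

Lemma size_actl l w : size (actl rho tau l w) = size w.
Proof. by elim: l => [|q l IH] //=; rewrite size_aact. Qed.

Definition flip (w : seq bool) :=
  take (size w).-1 w ++ map negb (drop (size w).-1 w).

Lemma flip_rcons u x : flip (rcons u x) = rcons u (~~ x).
Proof.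
rewrite /flip size_rcons /= -!cats1 take_size_cat // drop_size_cat //.
Qed.

Lemma flip_nil : flip [::] = [::].
Proof. by []. Qed.

Lemma flipK : involutive flip.
Proof. by case/lastP => [|u x] //; rewrite !flip_rcons negbK. Qed.

Lemma size_flip w : size (flip w) = size w.
Proof. by case/lastP: w => [|u x] //; rewrite flip_rcons !size_rcons. Qed.

Lemma perm_negb (r : {perm bool}) x : r (~~ x) = ~~ r x.
Proof.
have : r (~~ x) != r x by rewrite (inj_eq perm_inj); case: x.
by case: (r (~~ x)); case: (r x).
Qed.

Lemma aact_flip q w : aact rho tau q (flip w) = flip (aact rho tau q w).
Proof.
case/lastP: w => [|u x] //.
by rewrite flip_rcons !aact_rcons flip_rcons perm_negb.
Qed.

Lemma take_flip n w : size w = n.+1 -> take n (flip w) = take n w.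
Proof.
case/lastP: w => [|u x] //; rewrite size_rcons => -[<-].
by rewrite flip_rcons -!cats1 !take_size_cat.
Qed.

End Aux.

Section Main.
Variables (Q : finType) (rho : Q -> {perm bool}) (tau : Q -> bool -> Q).
Variables (S : {set Q}) (inv : Q -> Q) (n : nat).
Hypothesis Htrans : level_transitive rho tau S.

Definition Tn := (n.+1.-tuple bool).
Definition Dn := (@dart Q S n.+1).

Lemma flipT_P (t : Tn) : size (flip t) == n.+1.
Proof. by rewrite size_flip size_tuple. Qed.
Definition flipT (t : Tn) : Tn := Tuple (flipT_P t).
Lemma flipTK : involutive flipT.
Proof. by move=> t; apply: val_inj; rewrite /= flipK. Qed.
Definition swV : {perm Tn} := perm (can_inj flipTK).
Definition swDf (d : Dn) : Dn := (flipT d.1, d.2).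
Lemma swDfK : involutive swDf.
Proof. by case=> t s; rewrite /swDf /= flipTK. Qed.
Definition swD : {perm Dn} := perm (can_inj swDfK).

Definition Dk := deck_group (@dsrc Q S n.+1) (@drev Q rho tau S inv n.+1)
   (@piV n) (@piD Q S n).

Lemma sw_in : (swV, swD) \in Dk.
Proof.
rewrite inE; apply/andP; split; apply/forallP.
  case=> t s; rewrite /= !permE /= /swDf /=; apply/and3P; split => //.
    rewrite /drev /=; apply/eqP; congr (_, _); apply: val_inj.
    by rewrite /= aact_flip.
  apply/eqP; congr (_, _); apply: val_inj; by rewrite /= take_flip // size_tuple.
move=> t; rewrite permE; apply/eqP; apply: val_inj.
by rewrite /= take_flip // size_tuple.
Qed.

Lemma one_in : (1%g, 1%g) \in Dk.
Proof.
rewrite inE; apply/andP; split; apply/forallP => d; rewrite !perm1 //.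
by rewrite !eqxx.
Qed.

Lemma deck_shape p d : p \in Dk -> p.2 d = (p.1 d.1, d.2).
Proof.
rewrite inE => /andP[/forallP /(_ d) /and3P[/eqP H1 _ /eqP H3] _].
rewrite [p.2 d]surjective_pairing; congr (_, _); first exact: H1.
exact: (congr1 snd H3).
Qed.

Lemma deck_comm p s (Hs : s \in S) t : p \in Dk ->
  p.1 (actt rho tau s t) = actt rho tau s (p.1 t).
Proof.
move=> Hp; have := Hp; rewrite inE => /andP[/forallP /(_ (t, Sub s Hs)) /and3P[_ /eqP H2 _] _].
move: H2; rewrite !deck_shape //= /drev /=.
by case.
Qed.

Lemma deck_actl p l : p \in Dk -> all (mem S) l -> forall (t w : Tn),
  actl rho tau l t = w -> actl rho tau l (p.1 t) = p.1 w.
Proof.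
move=> Hp; elim: l => [|s l IH] /=.
  by move=> _ t w /val_inj ->.
case/andP => Hs Hl t w.
have P : size (actl rho tau l t) == n.+1 by rewrite size_actl size_tuple.
move: (IH Hl t (Tuple P) erefl) => /= ->.
move=> Hw.
have Ew : actt rho tau s (Tuple P) = w by apply: val_inj.
by rewrite -Ew deck_comm.
Qed.

Lemma deck_det p q (v0 : Tn) : p \in Dk -> q \in Dk -> p.1 v0 = q.1 v0 -> p = q.
Proof.
move=> Hp Hq E.
have E1 : p.1 = q.1.
  apply/permP => w; have [l [Hl Hw]] := Htrans v0 w.
  have B := deck_actl Hp Hl Hw; have A := deck_actl Hq Hl Hw.
  rewrite E in B; apply: val_inj; exact: (etrans (esym B) A).
have E2 : p.2 = q.2 by apply/permP => d; rewrite !deck_shape // E1.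
by case: p q E1 E2 {Hp Hq E} => a b [c d] /= -> ->.
Qed.

Lemma fibre (v : Tn) (w : Tn) : piV w = piV v -> w = v \/ w = flipT v.
Proof.
move=> E.
suff : val w = val v \/ val w = flip (val v) by case=> H; [left|right]; apply: val_inj.
move: (congr1 val E) => /=.
case: v {E} => v Hv; case: w => w Hw /=.
move: Hv Hw; case/lastP: v => [|u x] //; case/lastP: w => [|u' y] //.
rewrite !size_rcons => /eqP [Hu] /eqP [Hu'].
have T1 : take n (rcons u x) = u by rewrite -cats1 take_size_cat.
have T2 : take n (rcons u' y) = u' by rewrite -cats1 take_size_cat.
rewrite T1 T2 => Eu; subst; clear T1 T2.
rewrite flip_rcons.
by case: x; case: y; [left|right|right|left].
Qed.

End Main.

Section Main2.
Variables (Q : finType) (rho : Q -> {perm bool}) (tau : Q -> bool -> Q).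
Variables (S : {set Q}) (inv : Q -> Q) (n : nat).
Hypothesis Htrans : level_transitive rho tau S.

Definition sw : ({perm Tn n} * {perm Dn S n})%type := (swV n, swD S n).
Definition v0 : Tn n := [tuple of nseq n.+1 false].

Lemma sw_neq1 : sw != 1%g.
Proof.
apply/eqP => H.
have := congr1 (fun p : ({perm Tn n} * {perm Dn S n})%type => val (p.1 v0)) H.
rewrite /= permE /= perm1 /=.
have -> : false :: nseq n false = rcons (nseq n false) false.
  by elim: (n) => //= k ->.
by rewrite flip_rcons => /(congr1 (last true)); rewrite !last_rcons.
Qed.

Lemma deck_eq : Dk rho tau S inv n = [set 1%g; sw].
Proof.
apply/setP => p; rewrite in_set2; apply/idP/idP.
  move=> Hp; have := Hp; rewrite inE => /andP[_ /forallP /(_ v0) /eqP E].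
  case: (fibre E) => F.
    apply/orP; left; apply/eqP; apply: (deck_det Htrans Hp (one_in rho tau S inv n)).
    apply: etrans F _; by rewrite perm1.
  apply/orP; right; apply/eqP; apply: (deck_det Htrans Hp (sw_in rho tau S inv n)).
  apply: etrans F _; by rewrite permE.
by case/orP => /eqP ->; [exact: one_in | exact: sw_in].
Qed.

Lemma sw2 : (sw ^+ 2 = 1)%g.
Proof.
rewrite expgS expg1 /sw; congr (_, _); apply/permP => x;
  by rewrite permM !permE /= ?flipTK ?swDfK.
Qed.

Lemma cycle_sw : <[sw]>%g = [set 1%g; sw].
Proof.
apply/eqP; rewrite eq_sym eqEcard; apply/andP; split.
  by apply/subsetP => x; rewrite !inE => /orP[] /eqP ->; rewrite ?group1 ?cycle_id.
rewrite cards2 -orderE.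
have -> : (1%g != sw) = true by rewrite eq_sym sw_neq1.
by apply: dvdn_leq => //; rewrite order_dvdn sw2.
Qed.

End Main2.

Lemma covering_ok (Q : finType) (rho : Q -> {perm bool}) (tau : Q -> bool -> Q)
  (S : {set Q}) (inv : Q -> Q) (n : nat) :
  is_covering (@dsrc Q S n.+1) (@drev Q rho tau S inv n.+1)
    (@dsrc Q S n) (@drev Q rho tau S inv n) (@piV n) (@piD Q S n) 2.
Proof.
split.
- case=> t s; split => //; rewrite /piD /drev /=; congr (_, _).
  by apply: val_inj; rewrite /= take_aact.
- move=> v2.
  have P : size (rcons v2 false) == n.+1 by rewrite size_rcons size_tuple.
  exists (Tuple P); apply: val_inj; rewrite /= -cats1 take_size_cat //.
  by rewrite size_tuple.
- move=> v1 [t2 s2] /= E; exists (v1, s2); split; first by rewrite /piD /= -E.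
  by case=> a b [/= Ea /(congr1 snd) /= Eb]; rewrite Ea Eb.
- move=> v2.
  have P0 : size (rcons v2 false) == n.+1 by rewrite size_rcons size_tuple.
  have P1 : size (rcons v2 true) == n.+1 by rewrite size_rcons size_tuple.
  have T : forall b, take n (rcons v2 b) = v2.
    by move=> b; rewrite -cats1 take_size_cat // size_tuple.
  have -> : [set v1 | piV v1 == v2] = [set Tuple P0; Tuple P1].
    apply/setP => w; rewrite inE in_set2.
    apply/eqP/idP.
      move=> E.
      have : piV w = piV (Tuple P0) by rewrite E; apply: val_inj; rewrite /= T.
      case/fibre => -> ; first by rewrite eqxx.
      apply/orP; right; apply/eqP; apply: val_inj.
      by rewrite /= flip_rcons.
    by case/orP => /eqP ->; apply: val_inj; rewrite /= T.
  rewrite cards2; suff -> : (Tuple P0 != Tuple P1) by [].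
  by apply/eqP => /(congr1 (fun t : n.+1.-tuple bool => last true t)); rewrite /= !last_rcons.
Qed.

Lemma Psi_card (Q : finType) (rho : Q -> {perm bool}) (tau : Q -> bool -> Q)
  (S : {set Q}) (Htrans : level_transitive rho tau S) :
  #|<<[set rho s | s in S]>>%g| = 2.
Proof.
apply/eqP; rewrite eqn_leq; apply/andP; split.
  have -> : 2 = #|perm_on [set: bool]| by rewrite card_perm cardsT card_bool.
  apply: subset_leq_card; apply/subsetP => x _.
  by apply/subsetP => y _; rewrite inE.
rewrite cardG_gt1; apply/eqP => H1.
have [s Hs Hr] : exists2 s, s \in S & rho s != 1%g.
  case: (boolP [forall s in S, rho s == 1%g]) => [/forall_inP Hall|].
    have [l [Hl E]] := Htrans 1 [tuple false] [tuple true].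
    suff : forall x, actl rho tau l [:: x] = [:: x] by move=> /(_ false); rewrite E.
    move=> x; elim: l Hl {E} => [|q l IH] //= /andP[Hq Hl].
    by rewrite IH //= (eqP (Hall q Hq)) perm1.
  by rewrite negb_forall_in => /exists_inP[s Hs Hr]; exists s.
move: Hr; suff : rho s \in <<[set rho s | s in S]>>%g by rewrite H1 inE => ->.
by apply: mem_gen; apply: imset_f.
Qed.

Theorem corollary4p2
  (Q : finType) (rho : Q -> {perm bool}) (tau : Q -> bool -> Q)
  (S : {set Q}) (inv : Q -> Q)
  (Hbounded : bounded_automaton rho tau)
  (Hdistinct : forall s t, s \in S -> t \in S ->
      (forall w, aact rho tau s w = aact rho tau t w) -> s = t)
  (Hsym : forall s, s \in S ->
      inv s \in S /\ forall w, aact rho tau (inv s) (aact rho tau s w) = w)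
  (Hselfsim : self_similar rho tau S)
  (Htrans : level_transitive rho tau S)
  (Htile : forall n, tile_connected rho tau S n) :
  forall n : nat, 0 < n ->
    let srcV := @dsrc Q S n.+1 in
    let revV := @drev Q rho tau S inv n.+1 in
    let src0 := @dsrc Q S n in
    let rev0 := @drev Q rho tau S inv n in
    normal_covering srcV revV src0 rev0 (@piV n) (@piD Q S n) 2
    /\ deck_group srcV revV (@piV n) (@piD Q S n)
         \isog <<[set rho s | s in S]>>
    /\ <<[set rho s | s in S]>> \isog [set: 'Z_2].
Proof.
move=> n _ srcV revV src0 rev0.
have E : deck_group srcV revV (@piV n) (@piD Q S n) = [set 1%g; sw S n] := deck_eq inv n Htrans.
have PC := Psi_card Htrans.
have cP : cyclic <<[set rho s | s in S]>>%g by apply: prime_cyclic; rewrite PC.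
split; [split|split].
- exact: covering_ok.
- rewrite E cards2; move: (sw_neq1 S n); rewrite eq_sym => ->.
  done.
- have H : <[sw S n]>%g \isog <<[set rho s | s in S]>>%g; last first.
    rewrite cycle_sw in H.
    move: H; rewrite -E => H. exact H.
  rewrite isog_sym isog_cyclic_card // cycle_cyclic /=.
  rewrite -orderE PC orderE cycle_sw cards2; move: (sw_neq1 S n); rewrite eq_sym => ->.
  done.
- rewrite isog_cyclic_card // PC cardsT card_ord eqxx andbT.
  by apply: prime_cyclic; rewrite cardsT card_ord.
Qed.
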